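(* Let $C\subseteq\mathbb F_2^n$ be a classical linear code with dual code $C^\perp$, and let $\Gamma\subseteq 2^{[n]}$ be a set of channel supports. Let $\hat\Gamma=\{a\neq\emptyset: a\subseteq\gamma \text{ for some }\gamma\in\Gamma\}$ and let $D$ be the $|C^\perp\setminus\{0\}|\times|\hat\Gamma|$ real matrix with rows indexed by $s\in C^\perp\setminus\{0\}$, columns indexed by $a\in\hat\Gamma$, and entries $D[s,a]=1$ if $a\subseteq s$ and $D[s,a]=0$ otherwise. Then $D$ has full rank (rank equal to $|\hat\Gamma|$) if and only if $\gamma_1\cup\gamma_2\in\Delta^{D}$ for all $\gamma_1,\gamma_2\in\Gamma$.
   Context: A classical code $C$ is a subspace of $\mathbb F_2^n$ with parity check matrix $H$ whose rows span $C^\perp=\{a\in\mathbb F_2^n: a\cdot c=0\ \forall c\in C\}$; the syndrome of $e\in\mathbb F_2^n$ is $\mathrm{syn}(e)=He$. Vectors in $\mathbb F_2^n$ are identified with their support sets in $[n]$ (so $a\subseteq s$ means $\mathrm{supp}(a)\subseteq\mathrm{supp}(s)$). Define $\Delta^{D}=\{\gamma\subseteq[n]: \mathrm{syn}(e)\neq0 \text{ for all nonzero } e \text{ with } \mathrm{supp}(e)\subseteq\gamma\}$. *)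

(* Defs.v *)
From HB Require Import structures.
From mathcomp Require Import all_boot all_order all_algebra.
Set Implicit Arguments. Unset Strict Implicit. Unset Printing Implicit Defensive.
Import GRing.Theory Num.Theory.
Local Open Scope ring_scope.

Definition supp (n : nat) (v : 'rV['F_2]_n) : {set 'I_n} :=
  [set i | v 0 i != 0].

(* Syndrome of e w.r.t. the parity check matrix H (rows of H span C^perp). *)
Definition syn (m n : nat) (H : 'M['F_2]_(m, n)) (e : 'rV['F_2]_n) : 'cV['F_2]_m :=
  H *m e^T.

Definition Cperp (m n : nat) (H : 'M['F_2]_(m, n)) : {set 'rV['F_2]_n} :=
  [set s : 'rV['F_2]_n | (s <= H)%MS].

Definition Cperp_nz (m n : nat) (H : 'M['F_2]_(m, n)) : {set 'rV['F_2]_n} :=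
  Cperp H :\ 0.

Definition DeltaD (m n : nat) (H : 'M['F_2]_(m, n)) : {set {set 'I_n}} :=
  [set g : {set 'I_n} |
     [forall e : 'rV['F_2]_n, (e != 0) && (supp e \subset g) ==> (syn H e != 0)]].

Definition Gamma_hat (n : nat) (Gamma : {set {set 'I_n}}) : {set {set 'I_n}} :=
  [set a : {set 'I_n} | (a != set0) && [exists g in Gamma, a \subset g]].

Definition Dmat (R : nzRingType) (m n : nat) (H : 'M['F_2]_(m, n))
    (Gamma : {set {set 'I_n}}) :
    'M[R]_(#|Cperp_nz H|, #|Gamma_hat Gamma|) :=
  \matrix_(i < #|Cperp_nz H|, j < #|Gamma_hat Gamma|)
     (if enum_val j \subset supp (enum_val i) then 1 else 0).

(* Main.v *)
Require Import Defs.
From HB Require Import structures.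
From mathcomp Require Import all_boot all_order all_algebra.
Import GRing.Theory Num.Theory.
Local Open Scope ring_scope.
Set Implicit Arguments. Unset Strict Implicit.
From mathcomp Require Import lra zify.

Lemma DeltaDP m n (H : 'M['F_2]_(m, n)) (g : {set 'I_n}) :
  reflect (forall e, supp e \subset g -> syn H e = 0 -> e = 0) (g \in DeltaD H).
Proof.
rewrite inE; apply: (iffP forallP) => [h e se he | h e].
  apply/eqP; apply: contraT => ne; by move: (h e); rewrite ne se he eqxx.
apply/implyP => /andP[ne se]; apply: contra ne => /eqP he; apply/eqP; exact: h.
Qed.

Lemma surj m n (H : 'M['F_2]_(m, n)) (S : {set 'I_n}) : S \in DeltaD H ->
  forall t : 'rV_n, exists s : 'rV_n, (s <= H)%MS /\ forall j, j \in S -> s 0 j = t 0 j.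
Proof.
move/DeltaDP => hD t.
pose P : 'M['F_2]_n := diag_mx (\row_i (i \in S)%:R).
pose A := H *m P.
have K0 : P *m cokermx A = 0.
  apply/matrixP => i j.
  pose e := (col j (P *m cokermx A))^T.
  have se : supp e \subset S.
    apply/subsetP => k; rewrite inE /e /P mxE mxE mul_diag_mx mxE mxE.
    by case: (k \in S) => //; rewrite mul0r eqxx.
  have he : syn H e = 0. by rewrite /syn /e trmxK colE mulmxA (mulmxA H P) -/A mulmx_coker mul0mx.
  have := hD e se he; move/matrixP/(_ 0 i).
  by rewrite /e !mxE.
pose t' := t *m P.
have : (t' <= A)%MS by rewrite submxE /t' -mulmxA K0 mulmx0.
case/submxP => D hD'.
exists (D *m H); split; first exact: submxMl.
move=> j jS.
move/matrixP/(_ 0 j): hD'.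
rewrite /t' /A mulmxA !mul_mx_diag !mxE jS mulr1 => ->.
by rewrite mulr1.
Qed.
Lemma F2_cases (x : 'F_2) : x = 0 \/ x = 1.
Proof. case: x => [[|[|k]] Hk]; [left|right|]; try exact: val_inj. by []. Qed.
Lemma F2_11 : (1 + 1 : 'F_2) = 0. Proof. exact: val_inj. Qed.
Lemma F2_10 : (1 : 'F_2) != 0. Proof. by []. Qed.

Section S. Variable R : realFieldType.
Definition sg (x : 'F_2) : R := if x == 0 then 1 else -1.
Lemma sgD x y : sg (x + y) = sg x * sg y.
Proof. by case: (F2_cases x) => ->; case: (F2_cases y) => ->; rewrite /sg ?F2_11 ?addr0 ?add0r ?eqxx /= ?mulr1 ?mul1r ?mulrNN ?mulr1. Qed.
Lemma sg1 x : sg (x + 1) = - sg x.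
Proof. by rewrite sgD /sg /= mulrN1. Qed.
Lemma sgN0 x : x != 0 -> sg x = -1.
Proof. by rewrite /sg => /negbTE ->. Qed.
Lemma sg0 : sg 0 = 1. Proof. by rewrite /sg eqxx. Qed.

Variables (n : nat).
Definition psi (a0 : {set 'I_n}) (s : 'rV['F_2]_n) : R := \prod_(k in a0) sg (s 0 k).

Lemma sub_supp_eq (a : {set 'I_n}) (X Y : 'rV['F_2]_n) :
  (forall k, k \in a -> X 0 k = Y 0 k) -> (a \subset supp X) = (a \subset supp Y).
Proof.
move=> E; apply/subsetP/subsetP => h k ka; move: (h k ka); by rewrite !inE (E k ka).
Qed.

Lemma expand (b : {set 'I_n}) (s : 'rV['F_2]_n) :
  \sum_(J : {set 'I_n}) (if (J \subset b) && (J \subset supp s) then (-2) ^+ #|J| else 0)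
  = \prod_(k in b) sg (s 0 k).
Proof.
pose F (i : 'I_n) : R := if (i \in b) && (s 0 i != 0) then -2 else 0.
have L : \prod_(k in b) sg (s 0 k) = \prod_i (F i + 1).
  rewrite big_mkcond; apply: eq_bigr => i _; rewrite /F.
  case: (i \in b) => /=; last by rewrite add0r.
  have [->|h] := eqVneq (s 0 i) 0; first by rewrite sg0 /= add0r.
  rewrite /= sgN0 //; lra.
rewrite L bigA_distr; apply: eq_bigr => J _.
rewrite -big_mkcond /=.
case: ifP => h.
  rewrite (eq_bigr (fun _ => -2)) ?prodr_const // => i iJ.
  move/andP: h => [/subsetP/(_ i iJ) ib /subsetP/(_ i iJ)]; rewrite inE => si.
  by rewrite /F ib si.
have [i iJ Fi] : exists2 i, i \in J & F i = 0.
  move/negbT: h; rewrite negb_and => /orP[] /subsetPn[i iJ ni]; exists i => //;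
  rewrite /F; move: ni; rewrite ?inE => /negbTE ->; by rewrite ?andbF.
by rewrite (bigD1 i) //= Fi mul0r.
Qed.

Variables (m : nat) (H : 'M['F_2]_(m, n)).

Lemma sub_addr (s s0 : 'rV['F_2]_n) : (s0 <= H)%MS -> ((s + s0)%R <= H)%MS = (s <= H)%MS.
Proof.
move=> h0; apply/idP/idP => h; last exact: addmx_sub h h0.
have -> : s = (s + s0) + (- s0) by rewrite addrK.
by apply: addmx_sub h _; rewrite eqmx_opp.
Qed.

Lemma flip (a0 a S : {set 'I_n}) (i : 'I_n) (c : R) :
  S \in DeltaD H -> i \in a0 -> i \notin a -> a0 \subset S -> a \subset S ->
  \sum_(s : 'rV['F_2]_n | (s <= H)%MS) psi a0 s * (c * (if a \subset supp s then 1 else 0)) = 0.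
Proof.
move=> hS ia0 ia a0S aS.
have [s0 [s0H s0t]] := surj hS (\row_k (k == i)%:R).
set X := (X in X = 0).
have : X = - X.
  rewrite {1}/X (reindex_inj (addIr s0)) /=.
  rewrite -sumrN; apply: eq_big => s; first by rewrite sub_addr.
  move=> _.
  have -> : (a \subset supp (s + s0)) = (a \subset supp s).
    apply: sub_supp_eq => k ka; rewrite !mxE s0t ?(subsetP aS) // mxE.
    have -> : (k == i) = false by apply/negP => /eqP ki; rewrite -ki ka in ia.
    by rewrite addr0.
  rewrite /psi (bigD1 i) //= [in RHS](bigD1 i) //=.
  rewrite !mxE s0t ?(subsetP a0S) // mxE eqxx sg1.
  rewrite (eq_bigr (fun k => sg (s 0 k))); first by rewrite -!mulNr mulrA.
  move=> k /andP[ka0 ki]; rewrite !mxE s0t ?(subsetP a0S) // mxE (negbTE ki) addr0 //.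
move=> h; lra.
Qed.

Variable Gamma : {set {set 'I_n}}.
Notation G := (Gamma_hat Gamma).

Lemma inG (a : {set 'I_n}) : a \in G -> a != set0 /\ exists2 g, g \in Gamma & a \subset g.
Proof. rewrite inE => /andP[-> /exists_inP[g gG ag]]; split => //; by exists g. Qed.

Hypothesis hU : forall g1 g2, g1 \in Gamma -> g2 \in Gamma -> g1 :|: g2 \in DeltaD H.

Lemma A_step (u : 'I_#|G| -> R) :
  (forall s : 'rV['F_2]_n, (s <= H)%MS ->
     \sum_j u j * (if enum_val j \subset supp s then 1 else 0) = 0) ->
  forall j0 : 'I_#|G|, (forall j : 'I_#|G|, enum_val j0 \proper enum_val j -> u j = 0) -> u j0 = 0.
Proof.
move=> hf j0 hbig.
set a0 := enum_val j0.
have [a0n [g0 g0G a0g0]] := inG (enum_valP j0).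
have T : \sum_(s : 'rV['F_2]_n | (s <= H)%MS) psi a0 s *
          \sum_j u j * (if enum_val j \subset supp s then 1 else 0) = 0.
  by apply: big1 => s sH; rewrite hf // mulr0.
rewrite (eq_bigr _ (fun s _ => mulr_sumr _ _ _ _)) in T.
rewrite exchange_big /= (bigD1 j0) //= [X in _ + X]big1 ?addr0 in T; last first.
  move=> j jj0.
  have [a0j | na0j] := boolP (a0 \subset enum_val j).
    have pr : a0 \proper enum_val j.
      rewrite properEneq a0j andbT; apply: contra jj0 => /eqP e.
      by apply/eqP/enum_val_inj.
    by apply: big1 => s _; rewrite hbig // mul0r mulr0.
  have [i /andP[ia0 ija]] : exists i, (i \in a0) && (i \notin enum_val j).
    move/subsetPn: na0j => [i ? ?]; exists i; apply/andP; split => //.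
  have [_ [g gG ag]] := inG (enum_valP j).
  apply: (flip (S:=g0 :|: g) (i:=i)) => //; first exact: hU.
    by rewrite subsetU // a0g0.
  by rewrite subsetU // ag orbT.
have E : forall s : 'rV['F_2]_n, psi a0 s * (u j0 * (if a0 \subset supp s then 1 else 0))
   = if a0 \subset supp s then u j0 * (-1) ^+ #|a0| else 0.
  move=> s; case: ifP => h; last by rewrite !mulr0.
  rewrite mulr1 mulrC /psi; congr (_ * _).
  rewrite (eq_bigr (fun _ => -1)) ?prodr_const // => k ka; apply: sgN0.
  by move/subsetP: h => /(_ k ka); rewrite inE.
rewrite (eq_bigr _ (fun s _ => E s)) -big_mkcondr sumr_const in T.
have [s [sH st]] := surj (hU g0G g0G) (const_mx 1).
move/eqP: T; rewrite mulrn_eq0 => /orP[|]; last first.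
  by rewrite mulf_eq0 signr_eq0 orbF => /eqP.
move/eqP/card0_eq/(_ s); rewrite unfold_in /= sH /=.
have -> // : a0 \subset supp s.
apply/subsetP => k ka; rewrite inE st; last by rewrite setUid (subsetP a0g0).
by rewrite mxE.
Qed.

Lemma A_all (u : 'I_#|G| -> R) :
  (forall s : 'rV['F_2]_n, (s <= H)%MS ->
     \sum_j u j * (if enum_val j \subset supp s then 1 else 0) = 0) ->
  forall j, u j = 0.
Proof.
move=> hf.
suff h : forall k (j : 'I_#|G|), (n - #|enum_val j| < k)%N -> u j = 0.
  by move=> j; exact: (h (n - #|enum_val j|).+1).
elim=> [|k IH] j hj; first by [].
move: hj => hj.
apply: (A_step hf) => j' pr.
apply: IH.
have h1 := proper_card pr.
have h2 : (#|enum_val j'| <= n)%N by rewrite -[X in (_ <= X)%N]card_ord max_card.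
lia.
Qed.
Definition Pb (b t : {set 'I_n}) (s : 'rV['F_2]_n) : R :=
  (if t \subset b then (-2) ^+ #|t| else 0) * (if t \subset supp s then 1 else 0).

Lemma sumG (b g : {set 'I_n}) (s : 'rV['F_2]_n) : g \in Gamma -> b \subset g ->
  \sum_(t in G) Pb b t s = \prod_(k in b) sg (s 0 k) - 1.
Proof.
move=> gG bg.
rewrite -expand big_mkcond /=.
have E1 : 1 = \sum_(t : {set 'I_n}) (if t == set0 then 1 else 0) :> R.
  by rewrite -big_mkcond big_pred1_eq.
rewrite [X in _ = _ - X]E1.
rewrite -sumrB; apply: eq_bigr => t _.
rewrite /Pb.
have [->|t0] := eqVneq t set0.
  by rewrite !sub0set cards0 expr0 /= subrr inE eqxx.
rewrite subr0.
have [tb|tb] := boolP (t \subset b); last first.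
  by rewrite mul0r /=; case: ifP.
have -> : t \in G.
  by rewrite inE t0 /=; apply/exists_inP; exists g => //; apply: subset_trans bg.
by case: ifP; rewrite ?mulr1 ?mulr0.
Qed.

Lemma parity (e s : 'rV['F_2]_n) : syn H e = 0 -> (s <= H)%MS ->
  \prod_(k in supp e) sg (s 0 k) = 1.
Proof.
move=> he /submxP[D sD].
rewrite -(big_morph _ sgD sg0).
suff -> : \sum_(k in supp e) s 0 k = (s *m e^T) 0 0.
  by rewrite sD -mulmxA -/(syn H e) he mulmx0 mxE sg0.
rewrite [in RHS]mxE big_mkcond; apply: eq_bigr => k _; rewrite inE [e^T _ _]mxE.
by case: (F2_cases (e 0 k)) => ->; rewrite ?eqxx ?mulr0 ?mulr1.
Qed.

Lemma sg_sq (x : 'F_2) : sg x * sg x = 1.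
Proof. by rewrite -sgD; case: (F2_cases x) => ->; rewrite ?addr0 ?F2_11 sg0. Qed.

Lemma B_dep g1 g2 : g1 \in Gamma -> g2 \in Gamma -> g1 :|: g2 \notin DeltaD H ->
  exists u : 'I_#|G| -> R, (exists j, u j != 0) /\
   (forall s : 'rV['F_2]_n, (s <= H)%MS ->
     \sum_j u j * (if enum_val j \subset supp s then 1 else 0) = 0).
Proof.
move=> g1G g2G; rewrite inE negb_forall => /existsP[e].
rewrite negb_imply negbK => /andP[/andP[ne se] /eqP he].
set b1 := supp e :&: g1; set b2 := supp e :\: g1.
have b1g : b1 \subset g1 by apply: subsetIr.
have b2g : b2 \subset g2.
  apply/subsetP => k; rewrite !inE => /andP[kg1 ke].
  by have := subsetP se k; rewrite !inE (negbTE kg1) /=; apply.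
pose x (t : {set 'I_n}) : R :=
  (if t \subset b1 then (-2) ^+ #|t| else 0) - (if t \subset b2 then (-2) ^+ #|t| else 0).
have m2 : (-2 : R) != 0 by rewrite oppr_eq0 pnatr_eq0.
have se0 : supp e != set0.
  apply: contra ne => /eqP h; apply/eqP/rowP => k; rewrite mxE; apply/eqP; apply: contraT => hk.
  have : k \in supp e by rewrite inE.
  by rewrite h inE.
exists (fun j => x (enum_val j)); split.
  have b1b2 : forall t, t != set0 -> t \subset b1 -> t \subset b2 -> False.
    move=> t /set0Pn[k kt] t1 t2.
    move: (subsetP t1 k kt) (subsetP t2 k kt); rewrite !inE => /andP[_ ->].
    by [].
  have [b10|b1n] := eqVneq b1 set0.
    have b2n : b2 != set0.
      case/set0Pn: se0 => k ke; apply/set0Pn; exists k.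
      rewrite inE ke andbT; apply/negP => kg.
      have : k \in b1 by rewrite inE ke kg.
      by rewrite b10 inE.
    have b2G : b2 \in G by rewrite inE b2n /=; apply/exists_inP; exists g2.
    exists (enum_rank_in b2G b2); rewrite enum_rankK_in // /x (subxx b2).
    case: ifP => [h|_]; first by move: h; rewrite b10 subset0 (negbTE b2n).
    by rewrite sub0r oppr_eq0 expf_neq0.
  have b1G : b1 \in G by rewrite inE b1n /=; apply/exists_inP; exists g1.
  exists (enum_rank_in b1G b1); rewrite enum_rankK_in // /x (subxx b1).
  case: ifP => [h|_]; first by case: (b1b2 b1 b1n (subxx _) h).
  by rewrite subr0 expf_neq0.
move=> s sH.
rewrite -(big_enum_val (A:=mem G) (fun t => x t * (if t \subset supp s then 1 else 0))) /=.
rewrite (eq_bigr (fun t => Pb b1 t s - Pb b2 t s)); last by move=> t _; rewrite /Pb mulrBl.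
rewrite sumrB (sumG s g1G b1g) (sumG s g2G b2g).
have P := parity he sH; rewrite (big_setID g1) /= -/b1 -/b2 in P.
have Q : \prod_(k in b2) sg (s 0 k) * \prod_(k in b2) sg (s 0 k) = 1.
  by rewrite -big_split /=; apply: big1 => k _; exact: sg_sq.
have E : \prod_(k in b1) sg (s 0 k) = \prod_(k in b2) sg (s 0 k).
  transitivity (\prod_(k in b1) sg (s 0 k) * (\prod_(k in b2) sg (s 0 k) * \prod_(k in b2) sg (s 0 k))).
    by rewrite Q mulr1.
  by rewrite mulrA P mul1r.
by rewrite E subrr.
Qed.

End S.

Lemma rank_full (R : realFieldType) p q (D : 'M[R]_(p, q)) :
  \rank D = q <-> (forall u : 'rV_q, u *m D^T = 0 -> u = 0).
Proof.
rewrite -mxrank_tr; split => h.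
  have : kermx D^T == 0 by rewrite kermx_eq0 /row_free h eqxx.
  move/eqP => K u hu; apply/eqP; rewrite -submx0 -K; exact/sub_kermxP.
have : kermx D^T == 0.
  apply/eqP/row_matrixP => i; rewrite row0; apply: h; apply/sub_kermxP; exact: row_sub.
by rewrite kermx_eq0 => /eqP.
Qed.

Unset Implicit Arguments.

Theorem theorem3 (R : realFieldType) (m n : nat) (H : 'M['F_2]_(m, n))
    (Gamma : {set {set 'I_n}}) :
  \rank (Dmat R H Gamma) = #|Gamma_hat Gamma| <->
  (forall g1 g2, g1 \in Gamma -> g2 \in Gamma -> g1 :|: g2 \in DeltaD H).
Proof.
have inC : forall i : 'I_#|Cperp_nz H|, (enum_val i <= H)%MS.
  by move=> i; have := enum_valP i; rewrite !inE => /andP[_].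
have DT : forall (u : 'rV[R]_#|Gamma_hat Gamma|) i,
    (u *m (Dmat R H Gamma)^T) 0 i =
    \sum_j u 0 j * (if enum_val j \subset supp (enum_val i) then 1 else 0).
  by move=> u i; rewrite mxE; apply: eq_bigr => j _; rewrite !mxE.
rewrite rank_full; split.
  move=> hr g1 g2 g1G g2G; apply: contraT => hn.
  have [u [[j uj] hu]] := B_dep R g1G g2G hn.
  have E : \row_j u j = 0.
    apply: hr; apply/rowP => i; rewrite DT [RHS]mxE.
    rewrite -[RHS](hu _ (inC i)); apply: eq_bigr => k _; by rewrite mxE.
  move/rowP: E => /(_ j); rewrite !mxE => ujz.
  by rewrite ujz eqxx in uj.
move=> hU v hv; apply/rowP => j; rewrite mxE.
apply: (A_all hU (u := fun j => v 0 j)) => s sH.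
have [->|s0] := eqVneq s 0.
  apply: big1 => k _.
  have [kn _] := inG (enum_valP k).
  case: ifP => [h|_]; last by rewrite mulr0.
  have : supp (0 : 'rV['F_2]_n) = set0 by apply/setP => i; rewrite !inE mxE eqxx.
  move=> e0; rewrite e0 subset0 in h; by rewrite h in kn.
have sC : s \in Cperp_nz H by rewrite !inE s0 sH.
move/rowP: hv => /(_ (enum_rank_in sC s)).
by rewrite DT enum_rankK_in // mxE.
Qed.
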